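(* Let $u\in\Lambda$ with $c(u)=1$. Then for every $t\in\Lambda\cap C_{TM}$ there exists a positive integer $k_0$ such that for all integers $k\ge k_0$, $$c(t+ku)=1+\min\{f_i(t)-g_j(t):\ (i,j)\text{ such that } u\in C(i,j)\};$$ in particular $c(t+ku)$ is independent of $k$ for $k\ge k_0$.
   Context: Coordinates: $t=(\ell_1,\ell_2,m_1,m_2,n_1,n_2)$. $V_\ell$ is the irreducible $SU(3)$-representation with Dynkin label $\ell=(\ell_1,\ell_2)\in\mathbb{Z}_{\ge0}^2$; $c(t)=\dim(V_\ell\otimes V_m\otimes V_n)^{SU(3)}$ if all coordinates of $t$ are nonnegative, $0$ otherwise. $\Lambda=\{t\in\mathbb{Z}^6:\ell_1+m_1+n_1\equiv\ell_2+m_2+n_2\pmod 3\}$. $\omega(t)=\tfrac13(\ell_1+m_1+n_1-\ell_2-m_2-n_2)$; $f_1=0$, $f_2=\ell_1-m_2-\omega$, $f_3=\ell_2-n_1+\omega$, $g_1=-m_2$, $g_2=-n_1$, $g_3=\ell_1-m_2-n_2-\omega$, $g_4=-m_2-\omega$, $g_5=-n_1+\omega$, $g_6=\ell_2-m_1-n_1+\omega$ (indices $i\in\{1,2,3\}$, $j\in\{1,\dots,6\}$). $C_{TM}=\{t\in\mathbb{R}^6: g_j(t)\le f_i(t)\ \forall i,j\}$ and $C(i,j)=\{t\in C_{TM}: f_i(t)=\min_p f_p(t),\ g_j(t)=\max_q g_q(t)\}$. *)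

(* Defs.v *)
From HB Require Import structures.
From mathcomp Require Import all_boot all_order all_algebra.
Set Implicit Arguments. Unset Strict Implicit. Unset Printing Implicit Defensive.
Import Order.TTheory GRing.Theory Num.Theory.
Local Open Scope ring_scope.

Record pt6 := Pt6 { l1 : int; l2 : int; m1 : int; m2 : int; n1 : int; n2 : int }.

Definition addpt (t u : pt6) : pt6 :=
  Pt6 (l1 t + l1 u) (l2 t + l2 u) (m1 t + m1 u) (m2 t + m2 u)
      (n1 t + n1 u) (n2 t + n2 u).

Definition scalept (k : nat) (u : pt6) : pt6 :=
  Pt6 (l1 u *+ k) (l2 u *+ k) (m1 u *+ k) (m2 u *+ k) (n1 u *+ k) (n2 u *+ k).

Definition inLambda (t : pt6) : Prop :=
  (3 %| (l1 t + m1 t + n1 t - (l2 t + m2 t + n2 t)))%Z.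

(* Weights of V_(a,b) (Dynkin label (a,b)), listed with multiplicity, via the
   Gelfand-Tsetlin basis: top row (a+b, b, 0), middle row (x, y) with
   a+b >= x >= b >= y >= 0, bottom row z with x >= z >= y.  The GL_3 weight
   (z, x+y-z, a+2b-x-y) is written in fundamental-weight coordinates of sl_3:
   (2z-x-y, 2x+2y-z-a-2b). *)
Definition su3_weights (a b : nat) : seq (int * int) :=
  flatten [seq flatten [seq [seq ((2 * z)%:Z - x%:Z - y%:Z,
                                   (2 * x + 2 * y)%:Z - z%:Z - a%:Z - (2 * b)%:Z)
                             | z <- iota y (x - y).+1]
                        | y <- iota 0 b.+1]
          | x <- iota b a.+1].

(* Weyl alternation: the multiplicity of the trivial representation in a
   finite-dimensional representation with weight multiplicities mult is
   sum_{w in W} sgn(w) mult(rho - w rho).  In fundamental-weight coordinates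
   the six vectors rho - w rho are (0,0),(3,0),(0,3) (sign +1) and
   (2,-1),(-1,2),(2,2) (sign -1). *)
Definition weyl_sign (v : int * int) : int :=
  if (v == (0, 0)) || (v == (3, 0)) || (v == (0, 3)) then 1
  else if (v == (2, -1)) || (v == (-1, 2)) || (v == (2, 2)) then -1
  else 0.

Definition addw (p q : int * int) : int * int := (p.1 + q.1, p.2 + q.2).

(* dim (V_(a1,a2) (x) V_(b1,b2) (x) V_(c1,c2))^{SU(3)} *)
Definition inv_dim (a1 a2 b1 b2 c1 c2 : nat) : int :=
  \sum_(p <- su3_weights a1 a2) \sum_(q <- su3_weights b1 b2)
    \sum_(r <- su3_weights c1 c2) weyl_sign (addw (addw p q) r).

Definition nonneg6 (t : pt6) : bool :=
  [&& 0 <= l1 t, 0 <= l2 t, 0 <= m1 t, 0 <= m2 t, 0 <= n1 t & 0 <= n2 t].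

Definition c (t : pt6) : int :=
  if nonneg6 t then
    inv_dim `|l1 t|%N `|l2 t|%N `|m1 t|%N `|m2 t|%N `|n1 t|%N `|n2 t|%N
  else 0.

Definition omega (t : pt6) : rat :=
  ((l1 t + m1 t + n1 t - l2 t - m2 t - n2 t)%:~R) / 3%:R.

Definition fQ (i : 'I_3) (t : pt6) : rat :=
  match val i with
  | 0%N => 0
  | 1%N => (l1 t)%:~R - (m2 t)%:~R - omega t
  | _ => (l2 t)%:~R - (n1 t)%:~R + omega t
  end.

Definition gQ (j : 'I_6) (t : pt6) : rat :=
  match val j with
  | 0%N => - (m2 t)%:~R
  | 1%N => - (n1 t)%:~R
  | 2%N => (l1 t)%:~R - (m2 t)%:~R - (n2 t)%:~R - omega t
  | 3%N => - (m2 t)%:~R - omega t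
  | 4%N => - (n1 t)%:~R + omega t
  | _ => (l2 t)%:~R - (m1 t)%:~R - (n1 t)%:~R + omega t
  end.

(* C_TM (intersected with the integer points, which is all we need). *)
Definition inCTM (t : pt6) : Prop := forall (i : 'I_3) (j : 'I_6), gQ j t <= fQ i t.

Definition inCij (i : 'I_3) (j : 'I_6) (t : pt6) : Prop :=
  [/\ inCTM t, (forall p : 'I_3, fQ i t <= fQ p t) & (forall q : 'I_6, gQ q t <= gQ j t)].

(* Main.v *)
Require Import Defs.
From HB Require Import structures.
From mathcomp Require Import all_boot all_order all_algebra.
From mathcomp Require Import zify ring.
Import Order.TTheory GRing.Theory Num.Theory.
Local Open Scope ring_scope.

Definition Mij (a b i j : int) : int :=
  Order.max 0 (1 + Order.min (Order.min a i) (Order.min j (a + j - i)) - Order.max 0 (j - b)).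

Lemma sum_ind_iota (lo hi : int) m k :
  \sum_(n <- iota m k) ((lo <= n%:Z) && (n%:Z <= hi))%:Z =
  Order.max 0 (Order.min hi (m%:Z + k%:Z - 1) - Order.max lo m%:Z + 1).
Proof.
elim: k m => [|k IH] m; first by rewrite big_nil; lia.
rewrite /= big_cons IH; lia.
Qed.

Lemma sumW_param (a b : nat) (i j : int) :
  \sum_(r <- su3_weights a b) (r == (a%:Z - 2*i + j, b%:Z + i - 2*j))%:Z = Mij a b i j.
Proof.
set Z0 : int := a%:Z + b%:Z - i.
set S0 : int := a%:Z + 2 * b%:Z - j.
rewrite /su3_weights big_flatten big_map.
rewrite big_seq.
under eq_bigr => x hx.
  rewrite big_flatten big_map big_seq.
  under eq_bigr => y hy.
    rewrite big_map big_seq.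
    under eq_bigr => z hz.
      have -> : (((2 * z)%:Z - x%:Z - y%:Z, (2 * x + 2 * y)%:Z - z%:Z - a%:Z - (2 * b)%:Z) ==
                 (a%:Z - 2*i + j, b%:Z + i - 2*j))%:Z
              = ((Z0 <= z%:Z) && (z%:Z <= Z0 - 1 + (x%:Z + y%:Z == S0)%:Z))%:Z.
        rewrite xpair_eqE /Z0 /S0; lia.
    over.
    rewrite -big_seq sum_ind_iota.
    have -> : Order.max 0 (Order.min (Z0 - 1 + (x%:Z + y%:Z == S0)%:Z) (y%:Z + (x - y).+1%:Z - 1) - Order.max Z0 y%:Z + 1)
         = ((S0 - x%:Z <= y%:Z) && (y%:Z <= S0 - x%:Z - 1 + ((S0 - x%:Z <= Z0) && (Z0 <= x%:Z))%:Z))%:Z.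
      move: hx hy; rewrite !mem_iota; lia.
  over.
  rewrite -big_seq sum_ind_iota.
  have -> : Order.max 0 (Order.min (S0 - x%:Z - 1 + ((S0 - x%:Z <= Z0) && (Z0 <= x%:Z))%:Z) (0%:Z + b.+1%:Z - 1) - Order.max (S0 - x%:Z) 0%:Z + 1)
     = ((Order.max (S0 - Z0) (Order.max Z0 (S0 - b%:Z)) <= x%:Z) && (x%:Z <= S0))%:Z.
    lia.
over.
rewrite -big_seq sum_ind_iota /Mij /Z0 /S0; lia.
Qed.

Definition M (a b : int) (v : int * int) : int :=
  if (3 %| (2 * (a - v.1) + (b - v.2)))%Z
  then Mij a b ((2 * (a - v.1) + (b - v.2)) %/ 3)%Z (((a - v.1) + 2 * (b - v.2)) %/ 3)%Z
  else 0.

Definition psub (u v : int * int) : int * int := (u.1 - v.1, u.2 - v.2).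

Lemma M_paramE (a b : int) v i j : v.1 = a - 2*i + j -> v.2 = b + i - 2*j -> M a b v = Mij a b i j.
Proof.
case: v => v1 v2 /= h1 h2; rewrite /M /=; case: ifP => h; last by lia.
congr Mij; lia.
Qed.

Definition Ind (lo hi x : int) : int := ((lo <= x) && (x <= hi))%:Z.
Definition Rect (a b i j : int) : int :=
  Ind 0 a i * Ind 0 b j - Ind (a+1) (a+b+1) i * Ind (b+1) (a+b+1) j.

Lemma b2z_mul (P Q : bool) : (P%:Z * Q%:Z = (P && Q)%:Z)%R.
Proof. by case: P; case: Q. Qed.

Lemma g1 (a b i j : int) : 0 <= a -> 0 <= b ->
  Mij a b i j - Mij a b (i-1) (j-1) = Rect a b i j.
Proof.
move=> ha hb.
have -> : Rect a b i j = ((0 <= i <= a) && (0 <= j <= b))%:Z - ((a+1 <= i <= a+b+1) && (b+1 <= j <= a+b+1))%:Z.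
  by rewrite /Rect /Ind !b2z_mul; lia.
rewrite /Mij; lia.
Qed.

Definition eqi (x p : int) : int := (x == p)%:Z.

Lemma DInd lo hi x : lo <= hi + 1 -> Ind lo hi x - Ind lo hi (x - 1) = eqi x lo - eqi x (hi + 1).
Proof. rewrite /Ind /eqi; lia. Qed.

Lemma DRect (a b i j : int) : 0 <= a -> 0 <= b ->
  Rect a b i j - Rect a b (i-1) j - Rect a b i (j-1) + Rect a b (i-1) (j-1) =
  eqi i 0 * eqi j 0 - eqi i (a+1) * eqi j 0 - eqi i 0 * eqi j (b+1)
  + eqi i (a+b+2) * eqi j (b+1) + eqi i (a+1) * eqi j (a+b+2) - eqi i (a+b+2) * eqi j (a+b+2).
Proof.
move=> ha hb.
have -> : Rect a b i j - Rect a b (i-1) j - Rect a b i (j-1) + Rect a b (i-1) (j-1) =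
  (Ind 0 a i - Ind 0 a (i-1)) * (Ind 0 b j - Ind 0 b (j-1))
  - (Ind (a+1) (a+b+1) i - Ind (a+1) (a+b+1) (i-1)) * (Ind (b+1) (a+b+1) j - Ind (b+1) (a+b+1) (j-1)).
  rewrite /Rect; ring.
rewrite !DInd; try lia.
have -> : a + b + 1 + 1 = a + b + 2 by ring.
have -> : a + 1 = a + 1 by [].
have -> : b + 1 = b + 1 by [].
ring.
Qed.

Definition E1 a b (y : int*int) :=
  M a b (psub (0,0) y) + M a b (psub (3,0) y) + M a b (psub (0,3) y)
  - M a b (psub (2,-1) y) - M a b (psub (-1,2) y) - M a b (psub (2,2) y).

Definition I6 (a b : int) (y : int*int) : int :=
  (y == (-a, -b))%:Z - (y == (a+2, -a-b-1))%:Z - (y == (-a-b-1, b+2))%:Z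
  + (y == (a+b+3, -a))%:Z + (y == (-b, a+b+3))%:Z - (y == (b+2, a+2))%:Z.

Lemma eqi2 (x y p q : int) : eqi x p * eqi y q = ((x == p) && (y == q))%:Z.
Proof. by rewrite /eqi; case: (x == p); case: (y == q). Qed.

Lemma pair_iff (x1 x2 y1 y2 p1 p2 q1 q2 : int) :
  (x1 = p1 /\ x2 = p2 <-> y1 = q1 /\ y2 = q2) ->
  ((x1 == p1) && (x2 == p2)) = ((y1 == q1) && (y2 == q2)).
Proof.
move=> [h1 h2]; apply/idP/idP => /andP[/eqP e1 /eqP e2].
  by case: (h1 (conj e1 e2)) => -> ->; rewrite !eqxx.
by case: (h2 (conj e1 e2)) => -> ->; rewrite !eqxx.
Qed.

Lemma nd_false (a b y1 y2 p q : int) : (3 %| (2*(a+y1) + (b+y2)))%Z = false ->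
  (3 %| (2*(a+p) + (b+q)))%Z -> ((y1 == p) && (y2 == q)) = false.
Proof.
move=> h hpq; apply/negP => /andP[/eqP e1 /eqP e2]; subst.
by rewrite hpq in h.
Qed.

Lemma WCF (a b : int) y : 0 <= a -> 0 <= b -> E1 a b y = I6 a b y.
Proof.
move=> ha hb; case: y => y1 y2.
rewrite /E1 /I6 !xpair_eqE.
case h: (3 %| (2*(a + y1) + (b + y2)))%Z.
- case/dvdzP: h => k hk.
  rewrite (@M_paramE a b _ k (2*k - a - y1)) /=; [|lia|lia].
  rewrite (@M_paramE a b _ (k-2) (2*k - a - y1 - 1)) /=; [|lia|lia].
  rewrite (@M_paramE a b _ (k-1) (2*k - a - y1 - 2)) /=; [|lia|lia].
  rewrite (@M_paramE a b _ (k-1) (2*k - a - y1)) /=; [|lia|lia].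
  rewrite (@M_paramE a b _ k (2*k - a - y1 - 1)) /=; [|lia|lia].
  rewrite (@M_paramE a b _ (k-2) (2*k - a - y1 - 2)) /=; [|lia|lia].
  have := g1 a b (k) (2*k-a-y1) ha hb.
  have := g1 a b (k-1) (2*k-a-y1) ha hb.
  have := g1 a b (k) (2*k-a-y1-1) ha hb.
  have := g1 a b (k-1) (2*k-a-y1-1) ha hb.
  have := DRect a b k (2*k-a-y1) ha hb.
  have e1 : (k - 1 - 1) = k - 2 by lia.
  have e2 : (2*k-a-y1-1-1) = 2*k-a-y1-2 by lia.
  rewrite ?e1 ?e2 !eqi2.
  move=> hD h1 h2 h3 h4.
  have -> : Mij a b k (2 * k - a - y1) + Mij a b (k - 2) (2 * k - a - y1 - 1) + Mij a b (k - 1) (2 * k - a - y1 - 2) -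
    Mij a b (k - 1) (2 * k - a - y1) - Mij a b k (2 * k - a - y1 - 1) - Mij a b (k - 2) (2 * k - a - y1 - 2)
    = Rect a b k (2 * k - a - y1) - Rect a b (k - 1) (2 * k - a - y1) - Rect a b k (2 * k - a - y1 - 1) +
       Rect a b (k - 1) (2 * k - a - y1 - 1) by rewrite -h1 -h2 -h3 -h4; ring.
  rewrite hD; clear hD h1 h2 h3 h4.
  congr (_ - _ - _ + _ + _ - _); congr Posz; congr nat_of_bool; apply: pair_iff; lia.
- rewrite !(@nd_false a b y1 y2 _ _ h); try lia.
  rewrite /M /=.
  repeat (case: ifP => ?; first lia).
  lia.
Qed.

Lemma M_cases (a b : int) (v : int * int) : (exists i j, v.1 = a - 2*i + j /\ v.2 = b + i - 2*j) \/
   ~~ (3 %| (2*(a - v.1) + (b - v.2)))%Z.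
Proof.
case h: (3 %| (2*(a - v.1) + (b - v.2)))%Z; last by right.
left; case/dvdzP: h => k hk; exists k, (2*k - (a - v.1)); split; lia.
Qed.

Lemma M_nd (a b : int) (v : int * int) : ~~ (3 %| (2*(a - v.1) + (b - v.2)))%Z -> M a b v = 0.
Proof. by move=> h; rewrite /M (negbTE h). Qed.

Section MI.
Variables (a b i j : int).
Hypotheses (ha : 0 <= a) (hb : 0 <= b).
Lemma Mij_e : Mij a b i j = Mij b a (a + b - i) (a + b - j). Proof. rewrite /Mij; lia. Qed.
Lemma Mij_s1 : Mij a b i j = Mij b a (i - j + b) (a + b - j). Proof. rewrite /Mij; lia. Qed.
Lemma Mij_s2 : Mij a b i j = Mij b a (a + b - i) (j - i + a). Proof. rewrite /Mij; lia. Qed.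
Lemma Mij_s1s2 : Mij a b i j = Mij b a (i - j + b) i. Proof. rewrite /Mij; lia. Qed.
Lemma Mij_s2s1 : Mij a b i j = Mij b a j (j - i + a). Proof. rewrite /Mij; lia. Qed.
Lemma Mij_w0 : Mij a b i j = Mij b a j i. Proof. rewrite /Mij; lia. Qed.
Lemma Mij_inv1 : Mij a b (a - i + j) j = Mij a b i j. Proof. rewrite /Mij; lia. Qed.
Lemma Mij_inv2 : Mij a b i (b + i - j) = Mij a b i j. Proof. rewrite /Mij; lia. Qed.
End MI.

Definition s1f (v : int * int) : int * int := (- v.1, v.1 + v.2).
Definition s2f (v : int * int) : int * int := (v.1 + v.2, - v.2).
Definition ypt (n1 n2 : int) (p : int * int) : int * int := (- n1 - p.1, - n2 - p.2).

Lemma pw_gen (m1 m2 : int) (v v' : int * int) (I J : int -> int -> int) :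
  (forall i j, Mij m1 m2 i j = Mij m2 m1 (I i j) (J i j)) ->
  (forall i j, v.1 = m1 - 2*i + j -> v.2 = m2 + i - 2*j ->
     v'.1 = m2 - 2 * I i j + J i j /\ v'.2 = m1 + I i j - 2 * J i j) ->
  (~~ (3 %| (2*(m1 - v.1) + (m2 - v.2)))%Z -> ~~ (3 %| (2*(m2 - v'.1) + (m1 - v'.2)))%Z) ->
  M m1 m2 v = M m2 m1 v'.
Proof.
move=> hM hp hd; case: (M_cases m1 m2 v) => [[i [j [e1 e2]]]|hn].
  case: (hp i j e1 e2) => e1' e2'.
  by rewrite (M_paramE _ _ _ _ _ e1 e2) (M_paramE _ _ _ _ _ e1' e2') hM.
by rewrite !M_nd //; apply: hd.
Qed.

Ltac pw_tac lem := apply: pw_gen; [ move=> ? ?; apply: lem => // | move=> i j; rewrite /psub /ypt /s1f /s2f /= => ? ?; lia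
  | rewrite /psub /ypt /s1f /s2f /=; lia ].

Section PW.
Variables (m1 m2 n1 n2 : int) (p : int * int).
Hypotheses (h1 : 0 <= m1) (h2 : 0 <= m2).
Lemma PW_e : M m1 m2 (psub (-n1, -n2) p) = M m2 m1 (psub (0,0) (ypt n1 n2 p)).
Proof. pw_tac Mij_e. Qed.
Lemma PW_s1 : M m1 m2 (psub (n1+2, -n1-n2-1) (s1f p)) = M m2 m1 (psub (2,-1) (ypt n1 n2 p)).
Proof. pw_tac Mij_s1. Qed.
Lemma PW_s2 : M m1 m2 (psub (-n1-n2-1, n2+2) (s2f p)) = M m2 m1 (psub (-1,2) (ypt n1 n2 p)).
Proof. pw_tac Mij_s2. Qed.
Lemma PW_s1s2 : M m1 m2 (psub (n1+n2+3, -n1) (s1f (s2f p))) = M m2 m1 (psub (0,3) (ypt n1 n2 p)).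
Proof. pw_tac Mij_s1s2. Qed.
Lemma PW_s2s1 : M m1 m2 (psub (-n2, n1+n2+3) (s2f (s1f p))) = M m2 m1 (psub (3,0) (ypt n1 n2 p)).
Proof. pw_tac Mij_s2s1. Qed.
Lemma PW_w0 : M m1 m2 (psub (n2+2, n1+2) (s1f (s2f (s1f p)))) = M m2 m1 (psub (2,2) (ypt n1 n2 p)).
Proof. pw_tac Mij_w0. Qed.
End PW.

Lemma M_s1f (a b : int) (v : int * int) : 0 <= a -> 0 <= b -> M a b (s1f v) = M a b v.
Proof.
move=> ha hb; case: (M_cases a b v) => [[i [j [e1 e2]]]|hn].
  have e1' : (s1f v).1 = a - 2 * (a - i + j) + j by rewrite /s1f /=; lia.
  have e2' : (s1f v).2 = b + (a - i + j) - 2 * j by rewrite /s1f /=; lia.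
  by rewrite (M_paramE _ _ _ _ _ e1 e2) (M_paramE _ _ _ _ _ e1' e2') Mij_inv1.
rewrite !M_nd //; move: hn; rewrite /s1f /=; lia.
Qed.

Lemma M_s2f (a b : int) (v : int * int) : 0 <= a -> 0 <= b -> M a b (s2f v) = M a b v.
Proof.
move=> ha hb; case: (M_cases a b v) => [[i [j [e1 e2]]]|hn].
  have e1' : (s2f v).1 = a - 2 * i + (b + i - j) by rewrite /s2f /=; lia.
  have e2' : (s2f v).2 = b + i - 2 * (b + i - j) by rewrite /s2f /=; lia.
  by rewrite (M_paramE _ _ _ _ _ e1 e2) (M_paramE _ _ _ _ _ e1' e2') Mij_inv2.
rewrite !M_nd //; move: hn; rewrite /s2f /=; lia.
Qed.

Lemma cnt_sum (L : seq (int * int)) v : (count (pred1 v) L)%:Z = \sum_(r <- L) (r == v)%:Z.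
Proof.
elim: L => [|x L IH]; first by rewrite big_nil.
by rewrite big_cons /= PoszD IH.
Qed.

Lemma sumW (a b : nat) v : \sum_(r <- su3_weights a b) (r == v)%:Z = M a b v.
Proof.
case: (M_cases a b v) => [[i [j [e1 e2]]]|hn].
  have -> : v = (a%:Z - 2*i + j, b%:Z + i - 2*j) by case: v e1 e2 => /= ? ? -> ->.
  by rewrite sumW_param (M_paramE a b _ i j).
rewrite M_nd //.
rewrite /su3_weights big_flatten big_map big1 // => x _.
rewrite big_flatten big_map big1 // => y _.
rewrite big_map big1 // => z _.
case: v hn => v1 v2 /= hn; rewrite xpair_eqE; lia.
Qed.

Lemma s1fK : involutive s1f.
Proof. by case=> x y; rewrite /s1f /=; congr pair; ring. Qed.
Lemma s2fK : involutive s2f.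
Proof. by case=> x y; rewrite /s2f /=; congr pair; ring. Qed.

Lemma perm_inv (f : int * int -> int * int) (a b : nat) : involutive f ->
  (forall v, M a b (f v) = M a b v) ->
  perm_eq (su3_weights a b) (map f (su3_weights a b)).
Proof.
move=> fK hM; rewrite /perm_eq; apply/allP => x _; apply/eqP.
rewrite count_map.
have -> : count (preim f (pred1 x)) (su3_weights a b) = count (pred1 (f x)) (su3_weights a b).
  apply: eq_count => r /=; apply/eqP/eqP => [<-|->]; by rewrite fK.
suff : (count (pred1 x) (su3_weights a b))%:Z = (count (pred1 (f x)) (su3_weights a b))%:Z by case.
by rewrite !cnt_sum !sumW hM.
Qed.

Lemma sum_s1 (a b : nat) (F : int * int -> int) :
  \sum_(p <- su3_weights a b) F p = \sum_(p <- su3_weights a b) F (s1f p).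
Proof.
have hM : forall v, M a b (s1f v) = M a b v by move=> v; apply: M_s1f.
by rewrite (perm_big _ (@perm_inv s1f a b s1fK hM)) big_map.
Qed.

Lemma sum_s2 (a b : nat) (F : int * int -> int) :
  \sum_(p <- su3_weights a b) F p = \sum_(p <- su3_weights a b) F (s2f p).
Proof.
have hM : forall v, M a b (s2f v) = M a b v by move=> v; apply: M_s2f.
by rewrite (perm_big _ (@perm_inv s2f a b s2fK hM)) big_map.
Qed.

Lemma ws_exp (v : int * int) : weyl_sign v =
  (v == (0,0))%:Z + (v == (3,0))%:Z + (v == (0,3))%:Z
  - (v == (2,-1))%:Z - (v == (-1,2))%:Z - (v == (2,2))%:Z.
Proof.
case: v => v1 v2; rewrite /weyl_sign !xpair_eqE.
case: ifP => [/orP[/orP[]|]|h1]; first (by case/andP => /eqP -> /eqP ->);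
  first (by case/andP => /eqP -> /eqP ->); first (by case/andP => /eqP -> /eqP ->).
case: ifP => [/orP[/orP[]|]|h2]; first (by case/andP => /eqP -> /eqP ->);
  first (by case/andP => /eqP -> /eqP ->); first (by case/andP => /eqP -> /eqP ->).
move: h1 h2 => /negbT; rewrite !negb_or => /andP[/andP[/negbTE -> /negbTE ->] /negbTE ->].
move/negbT; rewrite !negb_or => /andP[/andP[/negbTE -> /negbTE ->] /negbTE ->].
by [].
Qed.

Lemma addw_eq (y r s : int * int) : (addw y r == s) = (r == psub s y).
Proof.
case: y r s => [y1 y2] [r1 r2] [s1 s2]; rewrite /addw /psub /= !xpair_eqE.
apply/idP/idP => /andP[/eqP e1 /eqP e2]; apply/andP; split; apply/eqP; lia.
Qed.

Section Sums.
Variable T : Type.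
Variable L : seq T.
Variables f1 f2 f3 f4 f5 f6 : T -> int.
Lemma sum6a : \sum_(r <- L) (f1 r + f2 r + f3 r - f4 r - f5 r - f6 r) =
  \sum_(r <- L) f1 r + \sum_(r <- L) f2 r + \sum_(r <- L) f3 r
  - \sum_(r <- L) f4 r - \sum_(r <- L) f5 r - \sum_(r <- L) f6 r.
Proof. by rewrite !big_split /= !sumrN. Qed.
Lemma sum6b : \sum_(r <- L) (f1 r - f2 r - f3 r + f4 r + f5 r - f6 r) =
  \sum_(r <- L) f1 r - \sum_(r <- L) f2 r - \sum_(r <- L) f3 r
  + \sum_(r <- L) f4 r + \sum_(r <- L) f5 r - \sum_(r <- L) f6 r.
Proof. by rewrite !big_split /= !sumrN. Qed.
End Sums.

Lemma stepA (n1 n2 : nat) y :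
  \sum_(r <- su3_weights n1 n2) weyl_sign (addw y r) = E1 n1 n2 y.
Proof.
under eq_bigr => r _ do rewrite ws_exp !addw_eq.
by rewrite sum6a !sumW.
Qed.

Lemma stepC (m1 m2 : nat) (a b : int) p :
  \sum_(q <- su3_weights m1 m2) I6 a b (addw p q) =
    M m1 m2 (psub (-a, -b) p) - M m1 m2 (psub (a+2, -a-b-1) p)
  - M m1 m2 (psub (-a-b-1, b+2) p) + M m1 m2 (psub (a+b+3, -a) p)
  + M m1 m2 (psub (-b, a+b+3) p) - M m1 m2 (psub (b+2, a+2) p).
Proof.
rewrite /I6.
under eq_bigr => r _ do rewrite !addw_eq.
by rewrite sum6b !sumW.
Qed.

Lemma ypt_eq (n1 n2 : int) p d : (ypt n1 n2 p == d) = (p == psub (-n1, -n2) d).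
Proof.
case: p d => [p1 p2] [d1 d2]; rewrite /ypt /psub /= !xpair_eqE.
apply/idP/idP => /andP[/eqP e1 /eqP e2]; apply/andP; split; apply/eqP; lia.
Qed.

Definition Tsum (l1 l2 m1 m2 n1 n2 : int) : int :=
  let a := m2 in let b := m1 in
    M l1 l2 (psub (-n1, -n2) (-a, -b)) - M l1 l2 (psub (-n1, -n2) (a+2, -a-b-1))
  - M l1 l2 (psub (-n1, -n2) (-a-b-1, b+2)) + M l1 l2 (psub (-n1, -n2) (a+b+3, -a))
  + M l1 l2 (psub (-n1, -n2) (-b, a+b+3)) - M l1 l2 (psub (-n1, -n2) (b+2, a+2)).

Lemma RS (l1 l2 m1 m2 n1 n2 : nat) : inv_dim l1 l2 m1 m2 n1 n2 = Tsum l1 l2 m1 m2 n1 n2.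
Proof.
rewrite /inv_dim.
under eq_bigr => p _ do under eq_bigr => q _ do rewrite stepA WCF //.
under eq_bigr => p _ do rewrite stepC.
rewrite sum6b.
set W := su3_weights l1 l2.
have E_e : \sum_(p <- W) M m1 m2 (psub (-(n1:int), -(n2:int)) p)
    = \sum_(p <- W) M m2 m1 (psub (0,0) (ypt n1 n2 p)).
  by apply: eq_bigr => p _; apply: PW_e.
have E_s1 : \sum_(p <- W) M m1 m2 (psub ((n1:int)+2, -(n1:int)-(n2:int)-1) p)
    = \sum_(p <- W) M m2 m1 (psub (2,-1) (ypt n1 n2 p)).
  rewrite (sum_s1 l1 l2 (fun p => M m1 m2 (psub ((n1:int)+2, -(n1:int)-(n2:int)-1) p))).
  by apply: eq_bigr => p _; apply: PW_s1.
have E_s2 : \sum_(p <- W) M m1 m2 (psub (-(n1:int)-(n2:int)-1, (n2:int)+2) p)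
    = \sum_(p <- W) M m2 m1 (psub (-1,2) (ypt n1 n2 p)).
  rewrite (sum_s2 l1 l2 (fun p => M m1 m2 (psub (-(n1:int)-(n2:int)-1, (n2:int)+2) p))).
  by apply: eq_bigr => p _; apply: PW_s2.
have E_s1s2 : \sum_(p <- W) M m1 m2 (psub ((n1:int)+(n2:int)+3, -(n1:int)) p)
    = \sum_(p <- W) M m2 m1 (psub (0,3) (ypt n1 n2 p)).
  rewrite (sum_s1 l1 l2 (fun p => M m1 m2 (psub ((n1:int)+(n2:int)+3, -(n1:int)) p))).
  rewrite (sum_s2 l1 l2 (fun p => M m1 m2 (psub ((n1:int)+(n2:int)+3, -(n1:int)) (s1f p)))).
  by apply: eq_bigr => p _; apply: PW_s1s2.
have E_s2s1 : \sum_(p <- W) M m1 m2 (psub (-(n2:int), (n1:int)+(n2:int)+3) p)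
    = \sum_(p <- W) M m2 m1 (psub (3,0) (ypt n1 n2 p)).
  rewrite (sum_s2 l1 l2 (fun p => M m1 m2 (psub (-(n2:int), (n1:int)+(n2:int)+3) p))).
  rewrite (sum_s1 l1 l2 (fun p => M m1 m2 (psub (-(n2:int), (n1:int)+(n2:int)+3) (s2f p)))).
  by apply: eq_bigr => p _; apply: PW_s2s1.
have E_w0 : \sum_(p <- W) M m1 m2 (psub ((n2:int)+2, (n1:int)+2) p)
    = \sum_(p <- W) M m2 m1 (psub (2,2) (ypt n1 n2 p)).
  rewrite (sum_s1 l1 l2 (fun p => M m1 m2 (psub ((n2:int)+2, (n1:int)+2) p))).
  rewrite (sum_s2 l1 l2 (fun p => M m1 m2 (psub ((n2:int)+2, (n1:int)+2) (s1f p)))).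
  rewrite (sum_s1 l1 l2 (fun p => M m1 m2 (psub ((n2:int)+2, (n1:int)+2) (s1f (s2f p))))).
  by apply: eq_bigr => p _; apply: PW_w0.
rewrite E_e E_s1 E_s2 E_s1s2 E_s2s1 E_w0.
transitivity (\sum_(p <- W) E1 m2 m1 (ypt n1 n2 p)).
  by rewrite /E1 sum6a; ring.
under eq_bigr => p _ do rewrite WCF //.
rewrite /I6 sum6b.
under eq_bigr => p _ do rewrite ypt_eq.
under [X in _ - X - _ + _ + _ - _]eq_bigr => p _ do rewrite ypt_eq.
under [X in _ - _ - X + _ + _ - _]eq_bigr => p _ do rewrite ypt_eq.
under [X in _ - _ - _ + X + _ - _]eq_bigr => p _ do rewrite ypt_eq.
under [X in _ - _ - _ + _ + X - _]eq_bigr => p _ do rewrite ypt_eq.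
under [X in _ - _ - _ + _ + _ - X]eq_bigr => p _ do rewrite ypt_eq.
by rewrite !sumW.
Qed.

Definition T6 (l1 l2 m1 m2 n1 n2 w : int) : int :=
  let i := l1 + n1 - m2 - w in let j := l2 + n2 - m1 + w in
  let A := m2 + 1 in let B := m1 + 1 in
  Mij l1 l2 i j - Mij l1 l2 (i+A) j - Mij l1 l2 i (j+B) + Mij l1 l2 (i+A+B) (j+B)
  + Mij l1 l2 (i+A) (j+A+B) - Mij l1 l2 (i+A+B) (j+A+B).

Lemma Tsum_T6 (l1 l2 m1 m2 n1 n2 w : int) : 3 * w = l1 + m1 + n1 - l2 - m2 - n2 ->
  Tsum l1 l2 m1 m2 n1 n2 = T6 l1 l2 m1 m2 n1 n2 w.
Proof.
move=> hw; rewrite /Tsum /T6.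
set i := l1 + n1 - m2 - w; set j := l2 + n2 - m1 + w.
rewrite (M_paramE l1 l2 _ i j); [| rewrite /psub /= /i /j; lia | rewrite /psub /= /i /j; lia].
rewrite (M_paramE l1 l2 _ (i + (m2+1)) j); [| rewrite /psub /= /i /j; lia | rewrite /psub /= /i /j; lia].
rewrite (M_paramE l1 l2 _ i (j + (m1+1))); [| rewrite /psub /= /i /j; lia | rewrite /psub /= /i /j; lia].
rewrite (M_paramE l1 l2 _ (i + (m2+1) + (m1+1)) (j + (m1+1))); [| rewrite /psub /= /i /j; lia | rewrite /psub /= /i /j; lia].
rewrite (M_paramE l1 l2 _ (i + (m2+1)) (j + (m2+1) + (m1+1))); [| rewrite /psub /= /i /j; lia | rewrite /psub /= /i /j; lia].
rewrite (M_paramE l1 l2 _ (i + (m2+1) + (m1+1)) (j + (m2+1) + (m1+1))); [| rewrite /psub /= /i /j; lia | rewrite /psub /= /i /j; lia].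
by [].
Qed.

Ltac kill_Mij := repeat match goal with |- context [Mij ?a ?b ?i ?j] =>
  rewrite (_ : Mij a b i j = 0); [| rewrite /Mij; lia] end.

Lemma vanish (l1 l2 m1 m2 n1 n2 w : int) :
  0 <= l1 -> 0 <= l2 -> 0 <= m1 -> 0 <= m2 -> 0 <= n1 -> 0 <= n2 ->
  3 * w = l1 + m1 + n1 - l2 - m2 - n2 ->
  (l1 - w < 0) \/ (l1 - m2 - w + n1 < 0) \/ (l1 - m2 + n1 - 2 * w < 0) \/
  (l2 - n1 + w + m2 < 0) \/ (l2 + w < 0) \/ (l2 - n1 + m2 + 2 * w < 0) ->
  T6 l1 l2 m1 m2 n1 n2 w = 0.
Proof.
move=> ? ? ? ? ? ? hw D; rewrite /T6.
case: D => [d|[d|[d|[d|[d|d]]]]]; kill_Mij; by [].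
Qed.

Definition Fi (i : 'I_3) (l1 l2 m1 m2 n1 n2 w : int) : int :=
  match val i with 0%N => 0 | 1%N => l1 - m2 - w | _ => l2 - n1 + w end.
Definition Gj (j : 'I_6) (l1 l2 m1 m2 n1 n2 w : int) : int :=
  match val j with 0%N => - m2 | 1%N => - n1 | 2%N => l1 - m2 - n2 - w
  | 3%N => - m2 - w | 4%N => - n1 + w | _ => l2 - m1 - n1 + w end.

Section CT.
Variables l1 l2 m1 m2 n1 n2 w : int.
Hypothesis hw : 3 * w = l1 + m1 + n1 - l2 - m2 - n2.
Hypotheses (hl1 : 0 <= l1) (hl2 : 0 <= l2) (hm1 : 0 <= m1) (hm2 : 0 <= m2) (hn1 : 0 <= n1) (hn2 : 0 <= n2).
Hypothesis H : forall i j, Gj j l1 l2 m1 m2 n1 n2 w <= Fi i l1 l2 m1 m2 n1 n2 w.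

Let i := l1 + n1 - m2 - w.
Let j := l2 + n2 - m1 + w.
Let A := m2 + 1.
Let B := m1 + 1.

Lemma T6_L3 : T6 l1 l2 m1 m2 n1 n2 w =
  (1 + Order.min (Order.min l1 i) (Order.min j (l1 + j - i)) - Order.max 0 (j - l2))
  - Order.max 0 (1 + (l1 + j - i - A) - Order.max 0 (j - l2))
  - Order.max 0 (1 + Order.min l1 i - (j + B - l2)).
Proof.
  have h00 := H (@Ordinal 3 0 isT) (@Ordinal 6 0 isT); rewrite /Fi /Gj /= in h00.
  have h01 := H (@Ordinal 3 0 isT) (@Ordinal 6 1 isT); rewrite /Fi /Gj /= in h01.
  have h02 := H (@Ordinal 3 0 isT) (@Ordinal 6 2 isT); rewrite /Fi /Gj /= in h02.
  have h03 := H (@Ordinal 3 0 isT) (@Ordinal 6 3 isT); rewrite /Fi /Gj /= in h03.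
  have h04 := H (@Ordinal 3 0 isT) (@Ordinal 6 4 isT); rewrite /Fi /Gj /= in h04.
  have h05 := H (@Ordinal 3 0 isT) (@Ordinal 6 5 isT); rewrite /Fi /Gj /= in h05.
  have h10 := H (@Ordinal 3 1 isT) (@Ordinal 6 0 isT); rewrite /Fi /Gj /= in h10.
  have h11 := H (@Ordinal 3 1 isT) (@Ordinal 6 1 isT); rewrite /Fi /Gj /= in h11.
  have h12 := H (@Ordinal 3 1 isT) (@Ordinal 6 2 isT); rewrite /Fi /Gj /= in h12.
  have h13 := H (@Ordinal 3 1 isT) (@Ordinal 6 3 isT); rewrite /Fi /Gj /= in h13.
  have h14 := H (@Ordinal 3 1 isT) (@Ordinal 6 4 isT); rewrite /Fi /Gj /= in h14.
  have h15 := H (@Ordinal 3 1 isT) (@Ordinal 6 5 isT); rewrite /Fi /Gj /= in h15.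
  have h20 := H (@Ordinal 3 2 isT) (@Ordinal 6 0 isT); rewrite /Fi /Gj /= in h20.
  have h21 := H (@Ordinal 3 2 isT) (@Ordinal 6 1 isT); rewrite /Fi /Gj /= in h21.
  have h22 := H (@Ordinal 3 2 isT) (@Ordinal 6 2 isT); rewrite /Fi /Gj /= in h22.
  have h23 := H (@Ordinal 3 2 isT) (@Ordinal 6 3 isT); rewrite /Fi /Gj /= in h23.
  have h24 := H (@Ordinal 3 2 isT) (@Ordinal 6 4 isT); rewrite /Fi /Gj /= in h24.
  have h25 := H (@Ordinal 3 2 isT) (@Ordinal 6 5 isT); rewrite /Fi /Gj /= in h25.
rewrite /T6 -/i -/j -/A -/B.
rewrite (_ : Mij l1 l2 (i + A + B) (j + B) = 0); last by rewrite /Mij /i /j /A /B; lia.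
rewrite (_ : Mij l1 l2 (i + A) (j + A + B) = 0); last by rewrite /Mij /i /j /A /B; lia.
rewrite (_ : Mij l1 l2 (i + A + B) (j + A + B) = 0); last by rewrite /Mij /i /j /A /B; lia.
rewrite (_ : Mij l1 l2 i j = (1 + Order.min (Order.min l1 i) (Order.min j (l1 + j - i)) - Order.max 0 (j - l2))); last by rewrite /Mij /i /j /A /B; lia.
rewrite (_ : Mij l1 l2 (i + A) j = Order.max 0 (1 + (l1 + j - i - A) - Order.max 0 (j - l2))); last by rewrite /Mij /i /j /A /B; lia.
rewrite (_ : Mij l1 l2 i (j + B) = Order.max 0 (1 + Order.min l1 i - (j + B - l2))); last by rewrite /Mij /i /j /A /B; lia.
ring.
Qed.

Lemma cform_le : forall p q, T6 l1 l2 m1 m2 n1 n2 w <= 1 + Fi p l1 l2 m1 m2 n1 n2 w - Gj q l1 l2 m1 m2 n1 n2 w.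
Proof.
  have h00 := H (@Ordinal 3 0 isT) (@Ordinal 6 0 isT); rewrite /Fi /Gj /= in h00.
  have h01 := H (@Ordinal 3 0 isT) (@Ordinal 6 1 isT); rewrite /Fi /Gj /= in h01.
  have h02 := H (@Ordinal 3 0 isT) (@Ordinal 6 2 isT); rewrite /Fi /Gj /= in h02.
  have h03 := H (@Ordinal 3 0 isT) (@Ordinal 6 3 isT); rewrite /Fi /Gj /= in h03.
  have h04 := H (@Ordinal 3 0 isT) (@Ordinal 6 4 isT); rewrite /Fi /Gj /= in h04.
  have h05 := H (@Ordinal 3 0 isT) (@Ordinal 6 5 isT); rewrite /Fi /Gj /= in h05.
  have h10 := H (@Ordinal 3 1 isT) (@Ordinal 6 0 isT); rewrite /Fi /Gj /= in h10.
  have h11 := H (@Ordinal 3 1 isT) (@Ordinal 6 1 isT); rewrite /Fi /Gj /= in h11.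
  have h12 := H (@Ordinal 3 1 isT) (@Ordinal 6 2 isT); rewrite /Fi /Gj /= in h12.
  have h13 := H (@Ordinal 3 1 isT) (@Ordinal 6 3 isT); rewrite /Fi /Gj /= in h13.
  have h14 := H (@Ordinal 3 1 isT) (@Ordinal 6 4 isT); rewrite /Fi /Gj /= in h14.
  have h15 := H (@Ordinal 3 1 isT) (@Ordinal 6 5 isT); rewrite /Fi /Gj /= in h15.
  have h20 := H (@Ordinal 3 2 isT) (@Ordinal 6 0 isT); rewrite /Fi /Gj /= in h20.
  have h21 := H (@Ordinal 3 2 isT) (@Ordinal 6 1 isT); rewrite /Fi /Gj /= in h21.
  have h22 := H (@Ordinal 3 2 isT) (@Ordinal 6 2 isT); rewrite /Fi /Gj /= in h22.
  have h23 := H (@Ordinal 3 2 isT) (@Ordinal 6 3 isT); rewrite /Fi /Gj /= in h23.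
  have h24 := H (@Ordinal 3 2 isT) (@Ordinal 6 4 isT); rewrite /Fi /Gj /= in h24.
  have h25 := H (@Ordinal 3 2 isT) (@Ordinal 6 5 isT); rewrite /Fi /Gj /= in h25.
rewrite T6_L3 /i /j /A /B.
move=> [[|[|[|//]]] ?] [[|[|[|[|[|[|//]]]]]] ?]; rewrite /Fi /Gj /=; lia.
Qed.

Lemma cform_ex : exists p q, T6 l1 l2 m1 m2 n1 n2 w = 1 + Fi p l1 l2 m1 m2 n1 n2 w - Gj q l1 l2 m1 m2 n1 n2 w.
Proof.
  have h00 := H (@Ordinal 3 0 isT) (@Ordinal 6 0 isT); rewrite /Fi /Gj /= in h00.
  have h01 := H (@Ordinal 3 0 isT) (@Ordinal 6 1 isT); rewrite /Fi /Gj /= in h01.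
  have h02 := H (@Ordinal 3 0 isT) (@Ordinal 6 2 isT); rewrite /Fi /Gj /= in h02.
  have h03 := H (@Ordinal 3 0 isT) (@Ordinal 6 3 isT); rewrite /Fi /Gj /= in h03.
  have h04 := H (@Ordinal 3 0 isT) (@Ordinal 6 4 isT); rewrite /Fi /Gj /= in h04.
  have h05 := H (@Ordinal 3 0 isT) (@Ordinal 6 5 isT); rewrite /Fi /Gj /= in h05.
  have h10 := H (@Ordinal 3 1 isT) (@Ordinal 6 0 isT); rewrite /Fi /Gj /= in h10.
  have h11 := H (@Ordinal 3 1 isT) (@Ordinal 6 1 isT); rewrite /Fi /Gj /= in h11.
  have h12 := H (@Ordinal 3 1 isT) (@Ordinal 6 2 isT); rewrite /Fi /Gj /= in h12.
  have h13 := H (@Ordinal 3 1 isT) (@Ordinal 6 3 isT); rewrite /Fi /Gj /= in h13.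
  have h14 := H (@Ordinal 3 1 isT) (@Ordinal 6 4 isT); rewrite /Fi /Gj /= in h14.
  have h15 := H (@Ordinal 3 1 isT) (@Ordinal 6 5 isT); rewrite /Fi /Gj /= in h15.
  have h20 := H (@Ordinal 3 2 isT) (@Ordinal 6 0 isT); rewrite /Fi /Gj /= in h20.
  have h21 := H (@Ordinal 3 2 isT) (@Ordinal 6 1 isT); rewrite /Fi /Gj /= in h21.
  have h22 := H (@Ordinal 3 2 isT) (@Ordinal 6 2 isT); rewrite /Fi /Gj /= in h22.
  have h23 := H (@Ordinal 3 2 isT) (@Ordinal 6 3 isT); rewrite /Fi /Gj /= in h23.
  have h24 := H (@Ordinal 3 2 isT) (@Ordinal 6 4 isT); rewrite /Fi /Gj /= in h24.
  have h25 := H (@Ordinal 3 2 isT) (@Ordinal 6 5 isT); rewrite /Fi /Gj /= in h25.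
rewrite T6_L3.
have [k3|k3] := boolP (0 < 1 + (l1 + j - i - A) - Order.max 0 (j - l2));
have [k2|k2] := boolP (j - l2 <= 0);
have [k5|k5] := boolP (0 < 1 + Order.min l1 i - (j + B - l2));
(have [k1|k1] := boolP ((l1 <= i) && (l1 <= j) && (l1 <= l1 + j - i));
  [ | have [k1'|k1'] := boolP ((i <= j) && (i <= l1 + j - i));
      [ | have [k1''|k1''] := boolP (j <= l1 + j - i)]]).
- exists (@Ordinal 3 0 isT), (@Ordinal 6 5 isT); rewrite /Fi /Gj /= /i /j /A /B; lia.
- exists (@Ordinal 3 0 isT), (@Ordinal 6 5 isT); rewrite /Fi /Gj /= /i /j /A /B; lia.
- exists (@Ordinal 3 0 isT), (@Ordinal 6 2 isT); rewrite /Fi /Gj /= /i /j /A /B; lia.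
- exists (@Ordinal 3 0 isT), (@Ordinal 6 2 isT); rewrite /Fi /Gj /= /i /j /A /B; lia.
- exists (@Ordinal 3 0 isT), (@Ordinal 6 3 isT); rewrite /Fi /Gj /= /i /j /A /B; lia.
- exists (@Ordinal 3 0 isT), (@Ordinal 6 1 isT); rewrite /Fi /Gj /= /i /j /A /B; lia.
- exists (@Ordinal 3 0 isT), (@Ordinal 6 4 isT); rewrite /Fi /Gj /= /i /j /A /B; lia.
- exists (@Ordinal 3 0 isT), (@Ordinal 6 0 isT); rewrite /Fi /Gj /= /i /j /A /B; lia.
- exists (@Ordinal 3 0 isT), (@Ordinal 6 5 isT); rewrite /Fi /Gj /= /i /j /A /B; lia.
- exists (@Ordinal 3 0 isT), (@Ordinal 6 5 isT); rewrite /Fi /Gj /= /i /j /A /B; lia.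
- exists (@Ordinal 3 0 isT), (@Ordinal 6 2 isT); rewrite /Fi /Gj /= /i /j /A /B; lia.
- exists (@Ordinal 3 0 isT), (@Ordinal 6 2 isT); rewrite /Fi /Gj /= /i /j /A /B; lia.
- exists (@Ordinal 3 0 isT), (@Ordinal 6 3 isT); rewrite /Fi /Gj /= /i /j /A /B; lia.
- exists (@Ordinal 3 0 isT), (@Ordinal 6 1 isT); rewrite /Fi /Gj /= /i /j /A /B; lia.
- exists (@Ordinal 3 0 isT), (@Ordinal 6 4 isT); rewrite /Fi /Gj /= /i /j /A /B; lia.
- exists (@Ordinal 3 0 isT), (@Ordinal 6 0 isT); rewrite /Fi /Gj /= /i /j /A /B; lia.
- exists (@Ordinal 3 1 isT), (@Ordinal 6 5 isT); rewrite /Fi /Gj /= /i /j /A /B; lia.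
- exists (@Ordinal 3 1 isT), (@Ordinal 6 5 isT); rewrite /Fi /Gj /= /i /j /A /B; lia.
- exists (@Ordinal 3 1 isT), (@Ordinal 6 2 isT); rewrite /Fi /Gj /= /i /j /A /B; lia.
- exists (@Ordinal 3 1 isT), (@Ordinal 6 2 isT); rewrite /Fi /Gj /= /i /j /A /B; lia.
- exists (@Ordinal 3 1 isT), (@Ordinal 6 3 isT); rewrite /Fi /Gj /= /i /j /A /B; lia.
- exists (@Ordinal 3 1 isT), (@Ordinal 6 1 isT); rewrite /Fi /Gj /= /i /j /A /B; lia.
- exists (@Ordinal 3 1 isT), (@Ordinal 6 4 isT); rewrite /Fi /Gj /= /i /j /A /B; lia.
- exists (@Ordinal 3 1 isT), (@Ordinal 6 0 isT); rewrite /Fi /Gj /= /i /j /A /B; lia.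
- exists (@Ordinal 3 2 isT), (@Ordinal 6 5 isT); rewrite /Fi /Gj /= /i /j /A /B; lia.
- exists (@Ordinal 3 2 isT), (@Ordinal 6 5 isT); rewrite /Fi /Gj /= /i /j /A /B; lia.
- exists (@Ordinal 3 2 isT), (@Ordinal 6 2 isT); rewrite /Fi /Gj /= /i /j /A /B; lia.
- exists (@Ordinal 3 2 isT), (@Ordinal 6 2 isT); rewrite /Fi /Gj /= /i /j /A /B; lia.
- exists (@Ordinal 3 2 isT), (@Ordinal 6 3 isT); rewrite /Fi /Gj /= /i /j /A /B; lia.
- exists (@Ordinal 3 2 isT), (@Ordinal 6 1 isT); rewrite /Fi /Gj /= /i /j /A /B; lia.
- exists (@Ordinal 3 2 isT), (@Ordinal 6 4 isT); rewrite /Fi /Gj /= /i /j /A /B; lia.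
- exists (@Ordinal 3 2 isT), (@Ordinal 6 0 isT); rewrite /Fi /Gj /= /i /j /A /B; lia.
Qed.
End CT.

Lemma inv_swap a1 a2 b1 b2 c1 c2 : inv_dim a1 a2 b1 b2 c1 c2 = inv_dim b1 b2 a1 a2 c1 c2.
Proof.
rewrite /inv_dim exchange_big /=.
apply: eq_bigr => q _; apply: eq_bigr => p _; apply: eq_bigr => r _.
by rewrite /addw /= [p.1 + _]addrC [p.2 + _]addrC.
Qed.

Lemma inv_rot a1 a2 b1 b2 c1 c2 : inv_dim a1 a2 b1 b2 c1 c2 = inv_dim c1 c2 a1 a2 b1 b2.
Proof.
rewrite /inv_dim.
under eq_bigr => p _ do rewrite exchange_big /=.
rewrite exchange_big /=.
apply: eq_bigr => r _; apply: eq_bigr => p _; apply: eq_bigr => q _.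
rewrite /addw /=; congr weyl_sign; congr pair; ring.
Qed.

Definition wz (t : pt6) : int := ((l1 t + m1 t + n1 t - (l2 t + m2 t + n2 t)) %/ 3)%Z.

Lemma wzP t : inLambda t -> 3 * wz t = l1 t + m1 t + n1 t - l2 t - m2 t - n2 t.
Proof. rewrite /inLambda /wz => h; lia. Qed.

Definition FzT (i : 'I_3) t := Fi i (l1 t) (l2 t) (m1 t) (m2 t) (n1 t) (n2 t) (wz t).
Definition GzT (j : 'I_6) t := Gj j (l1 t) (l2 t) (m1 t) (m2 t) (n1 t) (n2 t) (wz t).

Lemma omegaE t : inLambda t -> omega t = (wz t)%:~R.
Proof.
move=> h; rewrite /omega.
have -> : l1 t + m1 t + n1 t - l2 t - m2 t - n2 t = wz t * 3 by have := wzP t h; lia.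
rewrite intrM [X in _ * X / _](_ : _ = 3%:R) // mulfK //.
Qed.

Lemma fQE t i : inLambda t -> fQ i t = (FzT i t)%:~R.
Proof.
move=> h; rewrite /fQ /FzT /Fi omegaE //.
by case: i => [[|[|[|//]]] ?] /=; rewrite ?intrD ?intrN ?mulr0z.
Qed.

Lemma gQE t j : inLambda t -> gQ j t = (GzT j t)%:~R.
Proof.
move=> h; rewrite /gQ /GzT /Gj omegaE //.
by case: j => [[|[|[|[|[|[|//]]]]]] ?] /=; rewrite ?intrD ?intrN.
Qed.

Lemma absK (x : int) : 0 <= x -> (`|x|%N)%:Z = x.
Proof. lia. Qed.

Lemma nonnegP t : nonneg6 t ->
  [/\ 0 <= l1 t, 0 <= l2 t, 0 <= m1 t, 0 <= m2 t & (0 <= n1 t) && (0 <= n2 t)].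
Proof. by case/andP => ? /andP[? /andP[? /andP[? /andP[? ?]]]]; split => //; apply/andP. Qed.

Lemma c_T6 t : inLambda t -> nonneg6 t ->
  [/\ c t = T6 (l1 t) (l2 t) (m1 t) (m2 t) (n1 t) (n2 t) (wz t),
      c t = T6 (m1 t) (m2 t) (l1 t) (l2 t) (n1 t) (n2 t) (wz t) &
      c t = T6 (n1 t) (n2 t) (l1 t) (l2 t) (m1 t) (m2 t) (wz t)].
Proof.
move=> hL hn; have hw := wzP t hL.
have [h1 h2 h3 h4 /andP[h5 h6]] := nonnegP t hn.
rewrite /c hn; split.
- by rewrite RS !absK // (Tsum_T6 _ _ _ _ _ _ (wz t)) //; lia.
- by rewrite inv_swap RS !absK // (Tsum_T6 _ _ _ _ _ _ (wz t)) //; lia.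
- by rewrite inv_rot RS !absK // (Tsum_T6 _ _ _ _ _ _ (wz t)) //; lia.
Qed.

Lemma c_viol t i j : inLambda t -> FzT i t < GzT j t -> c t = 0.
Proof.
move=> hL hv.
case hn: (nonneg6 t); last by rewrite /c hn.
have hw := wzP t hL.
have [h1 h2 h3 h4 /andP[h5 h6]] := nonnegP t hn.
have [e1 e2 e3] := c_T6 t hL hn.
move: hv; case: i => [[|[|[|//]]] ?]; case: j => [[|[|[|[|[|[|//]]]]]] ?];
  rewrite /FzT /GzT /Fi /Gj /= => hv;
  first [ lia
        | (rewrite e1; apply: vanish; lia)
        | (rewrite e2; apply: vanish; lia)
        | (rewrite e3; apply: vanish; lia) ].
Qed.

Lemma c_ctm t : inLambda t -> (forall i j, GzT j t <= FzT i t) ->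
  (forall p q, c t <= 1 + FzT p t - GzT q t) /\ exists p q, c t = 1 + FzT p t - GzT q t.
Proof.
move=> hL H.
have hw := wzP t hL.
have := H (@Ordinal 3 0 isT) (@Ordinal 6 0 isT); have := H (@Ordinal 3 0 isT) (@Ordinal 6 1 isT).
have := H (@Ordinal 3 1 isT) (@Ordinal 6 3 isT); have := H (@Ordinal 3 2 isT) (@Ordinal 6 4 isT).
have := H (@Ordinal 3 2 isT) (@Ordinal 6 5 isT); have := H (@Ordinal 3 1 isT) (@Ordinal 6 2 isT).
rewrite /FzT /GzT /Fi /Gj /= => a1 a2 a3 a4 a5 a6.
have hn : nonneg6 t.
  rewrite /nonneg6; do 5 (apply/andP; split; first lia); lia.
have [e1 _ _] := c_T6 t hL hn.
rewrite e1; split.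
  by move=> p q; apply: cform_le => //; lia.
by apply: cform_ex => //; lia.
Qed.

Lemma mulnle (x y : int) (k : nat) : x <= y -> x *+ k <= y *+ k.
Proof. nia. Qed.

Definition Sz (t : pt6) : int :=
  `|l1 t| + `|l2 t| + `|m1 t| + `|m2 t| + `|n1 t| + `|n2 t| + `|wz t|.

Lemma Fbound t p : - Sz t <= FzT p t <= Sz t.
Proof. rewrite /FzT /Fi /Sz; case: p => [[|[|[|//]]] ?] /=; lia. Qed.
Lemma Gbound t q : - Sz t <= GzT q t <= Sz t.
Proof. rewrite /GzT /Gj /Sz; case: q => [[|[|[|[|[|[|//]]]]]] ?] /=; lia. Qed.

Lemma lin_t (t u : pt6) (k : nat) : inLambda t -> inLambda u ->
  let t' := addpt t (scalept k u) in
  inLambda t' /\ wz t' = wz t + wz u *+ k.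
Proof.
move=> ht hu /=; have e1 := wzP t ht; have e2 := wzP u hu.
have h : l1 (addpt t (scalept k u)) + m1 (addpt t (scalept k u)) + n1 (addpt t (scalept k u))
   - (l2 (addpt t (scalept k u)) + m2 (addpt t (scalept k u)) + n2 (addpt t (scalept k u)))
   = 3 * (wz t + wz u *+ k).
  have e2k := congr1 (fun x => x *+ k) e2; simpl in e2k; rewrite /=; lia.
split; first by rewrite /inLambda h; apply/dvdzP; exists (wz t + wz u *+ k); ring.
by rewrite {1}/wz h mulKz.
Qed.

Lemma FE t u k p : inLambda t -> inLambda u ->
  FzT p (addpt t (scalept k u)) = FzT p t + FzT p u *+ k.
Proof.
move=> ht hu; have [_ hw] := lin_t t u k ht hu.
rewrite /FzT hw /Fi; case: p => [[|[|[|//]]] ?] /=; lia.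
Qed.

Lemma GE t u k q : inLambda t -> inLambda u ->
  GzT q (addpt t (scalept k u)) = GzT q t + GzT q u *+ k.
Proof.
move=> ht hu; have [_ hw] := lin_t t u k ht hu.
rewrite /GzT hw /Gj; case: q => [[|[|[|[|[|[|//]]]]]] ?] /=; lia.
Qed.

Theorem mainTheorem6 (u : pt6) :
  inLambda u -> c u = 1 ->
  forall t : pt6, inLambda t -> inCTM t ->
  exists k0 : nat, (0 < k0)%N /\
    forall k : nat, (k0 <= k)%N ->
      (exists (i : 'I_3) (j : 'I_6), inCij i j u /\
          (c (addpt t (scalept k u)))%:~R = 1 + (fQ i t - gQ j t) :> rat) /\
      (forall (i : 'I_3) (j : 'I_6), inCij i j u ->
          (c (addpt t (scalept k u)))%:~R <= 1 + (fQ i t - gQ j t) :> rat).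
Proof.
move=> hLu cu t hLt hct.
have CTt : forall i j, GzT j t <= FzT i t.
  by move=> i j; have := hct i j; rewrite fQE // gQE // ler_int.
have CTu : forall i j, GzT j u <= FzT i u.
  move=> i j; rewrite leNgt; apply/negP => hv.
  by move: cu; rewrite (c_viol u i j hLu hv).
have [_ [p0 [q0 equ]]] := c_ctm u hLu CTu.
rewrite cu in equ.
have minF : forall p, FzT p0 u <= FzT p u by move=> p; have := CTu p q0; lia.
have maxG : forall q, GzT q u <= GzT q0 u by move=> q; have := CTu p0 q; lia.
have Sz0 : 0 <= Sz t by rewrite /Sz; lia.
exists (absz (2 * Sz t + 1)%R).
split; first by lia.
move=> k hk.
have hk' : 2 * Sz t + 1 <= k%:Z by lia.
have [hLt' _] := lin_t t u k hLt hLu.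
have CTt' : forall i j, GzT j (addpt t (scalept k u)) <= FzT i (addpt t (scalept k u)).
  move=> i j; rewrite FE // GE //; have := CTt i j; have := mulnle _ _ k (CTu i j); lia.
have [le' [ps [qs eqs]]] := c_ctm _ hLt' CTt'.
have Fmin : forall p, FzT ps u <= FzT p u.
  move=> p; rewrite leNgt; apply/negP => hlt.
  have hlt' : FzT p u + 1 <= FzT ps u by lia.
  have := mulnle _ _ k hlt'; have := le' p qs; rewrite eqs !FE // !GE //.
  have := Fbound t p; have := Fbound t ps; lia.
have Gmax : forall q, GzT q u <= GzT qs u.
  move=> q; rewrite leNgt; apply/negP => hlt.
  have hlt' : GzT qs u + 1 <= GzT q u by lia.
  have := mulnle _ _ k hlt'; have := le' ps q; rewrite eqs !FE // !GE //.
  have := Gbound t q; have := Gbound t qs; lia.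
have eF : FzT ps u = FzT p0 u by have := Fmin p0; have := minF ps; lia.
have eG : GzT qs u = GzT q0 u by have := Gmax q0; have := maxG qs; lia.
have CTuQ : inCTM u by move=> i j; rewrite fQE // gQE // ler_int.
split.
- exists ps, qs; split.
    split => //.
      by move=> p; rewrite !fQE // ler_int.
    by move=> q; rewrite !gQE // ler_int.
  rewrite eqs !FE // !GE // fQE // gQE //.
  have -> : FzT ps u = GzT qs u by lia.
  have -> : 1 + (FzT ps t + GzT qs u *+ k) - (GzT qs t + GzT qs u *+ k) = 1 + (FzT ps t - GzT qs t) by ring.
  by rewrite intrD intrB mulr1z.
- move=> i j [_ hmin hmax].
  have Fi_u : FzT i u = FzT p0 u.
    by have := hmin p0; rewrite !fQE // ler_int; have := minF i; lia.
  have Gj_u : GzT j u = GzT q0 u.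
    by have := hmax q0; rewrite !gQE // ler_int; have := maxG j; lia.
  have := le' i j; rewrite !FE // !GE // Fi_u Gj_u => hle.
  have e0 : FzT p0 u = GzT q0 u by lia.
  rewrite e0 in hle.
  have hc : c (addpt t (scalept k u)) <= 1 + (FzT i t - GzT j t) by lia.
  rewrite fQE // gQE //.
  have -> : (1 + ((FzT i t)%:~R - (GzT j t)%:~R) : rat) = (1 + (FzT i t - GzT j t))%:~R
    by rewrite intrD intrB mulr1z.
  by rewrite ler_int.
Qed.
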